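(* Let $A\in\mathbb{C}^{n\times n}$, $k=\mathrm{Ind}(A)$, let $l\ge k$ be an integer and $m\in\mathbb{N}=\{1,2,\dots\}$. Then: (a) $A^{\#_m}AA^{\#_m}=A^{\#_m}$; (b) $A_1A^{\#_m}A_1=A_1$ and $A^{\#_m}A_1A^{\#_m}=A^{\#_m}$, where $A_1=AA^{\mathrm{cEP}}A$; (c) $A(A^{\#_m})^2=A^{\#_m}$; (d) $A^{\#_m}A^{l+1}=A^l$; (e) $A^{\#_m}=(A^d)^{m+1}P_{A^l}A^mP_{A^m}$; (f) $A^{\#_m}=A^l(A^{l+m+1})^\dagger A^mP_{A^m}$; (g) $\mathrm{rk}(A^{\#_m})=\mathrm{rk}(A^k)$; (h) $\mathcal{R}(A^{\#_m})=\mathcal{R}(A^k)$; (i) $\mathcal{N}(A^{\#_m})=\mathcal{N}((A^k)^*A^mP_{A^m})$; (j) $A^{\#_m}A^{m+1}=(A^{\mathrm{cEP}})^{m+1}A^{2m+1}$.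
   Context: For $A\in\mathbb{C}^{n\times n}$: $A^*$ conjugate transpose, $A^\dagger$ Moore–Penrose inverse, $\mathcal{R}(\cdot)$, $\mathcal{N}(\cdot)$ column space and null space, $\mathrm{rk}$ rank, $P_A=AA^\dagger$, $A^0=I_n$. The index $\mathrm{Ind}(A)$ is the smallest nonnegative integer $k$ with $\mathcal{R}(A^k)=\mathcal{R}(A^{k+1})$. $A^d$ is the Drazin inverse (unique $X$ with $XAX=X$, $AX=XA$, $XA^{k+1}=A^k$). The core-EP inverse $A^{\mathrm{cEP}}$ is the unique $X$ with $XAX=X$ and $\mathcal{R}(X)=\mathcal{R}(X^* )=\mathcal{R}(A^k)$. For $m\in\mathbb{N}$, the $m$-weak group inverse is $A^{\mathrm{WG}_m}:=(A^{\mathrm{cEP}})^{m+1}A^m$ and the $m$-weak core inverse is $A^{\#_m}:=A^{\mathrm{WG}_m}P_{A^m}$. *)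

(* Defs.v *)
From HB Require Import structures.
From mathcomp Require Import all_boot all_order all_algebra.
From mathcomp Require Import boolp classical_sets.
From mathcomp Require Import complex.
From mathcomp Require Import Rstruct.
Set Implicit Arguments. Unset Strict Implicit. Unset Printing Implicit Defensive.
Import Order.TTheory GRing.Theory Num.Theory.
Local Open Scope ring_scope.

Section GenInv.
Variable C : numClosedFieldType.
Variable n : nat.
Implicit Types A X : 'M[C]_n.

Definition ctmx (p q : nat) (M : 'M[C]_(p, q)) : 'M[C]_(q, p) :=
  (map_mx Num.conj M)^T.

(* column space R(M) represented (via transposition) as a row space;
   R(M) = R(N) is  (colsp M == colsp N)%MS *)
Definition colsp (p q : nat) (M : 'M[C]_(p, q)) : 'M[C]_(q, p) := M^T.

(* null space N(M) = {v | M v = 0}, represented as the row space of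
   kermx M^T, whose rows u satisfy u *m M^T = 0, i.e. M *m u^T = 0 *)
Definition nullsp (p q : nat) (M : 'M[C]_(p, q)) : 'M[C]_q := kermx M^T.

Definition is_MP A X : Prop :=
  [/\ A *m X *m A = A, X *m A *m X = X,
      ctmx (A *m X) = A *m X & ctmx (X *m A) = X *m A].

Definition mpinv A : 'M[C]_n := xget 0 (is_MP A).

Definition projP A : 'M[C]_n := A *m mpinv A.

Definition is_index A (k : nat) : Prop :=
  (colsp (A ^+ k) == colsp (A ^+ k.+1))%MS /\
  (forall j, (j < k)%N -> ~~ (colsp (A ^+ j) == colsp (A ^+ j.+1))%MS).

Definition ind A : nat := xget 0%N (is_index A).

Definition is_drazin A X : Prop :=
  [/\ X *m A *m X = X, A *m X = X *m A & X *m A ^+ (ind A).+1 = A ^+ ind A].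

Definition drazin A : 'M[C]_n := xget 0 (is_drazin A).

Definition is_coreEP A X : Prop :=
  [/\ X *m A *m X = X, (colsp X == colsp (A ^+ ind A))%MS
    & (colsp (ctmx X) == colsp (A ^+ ind A))%MS].

Definition coreEP A : 'M[C]_n := xget 0 (is_coreEP A).

Definition wg A (m : nat) : 'M[C]_n := (coreEP A) ^+ m.+1 *m A ^+ m.
Definition wcore A (m : nat) : 'M[C]_n := wg A m *m projP (A ^+ m).

End GenInv.

Notation Cplx := (Rdefinitions.R[i]).

(* Main.v *)
Require Import Defs.
From HB Require Import structures.
From mathcomp Require Import all_boot all_order all_algebra.
From mathcomp Require Import boolp classical_sets.
From mathcomp Require Import complex.
From mathcomp Require Import Rstruct.
Import Order.TTheory GRing.Theory Num.Theory.
Local Open Scope ring_scope.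
Set Implicit Arguments. Unset Strict Implicit. Unset Printing Implicit Defensive.

Section Gen.
Variable C : numClosedFieldType.

Lemma ctmxM p q r (M : 'M[C]_(p, q)) (N : 'M[C]_(q, r)) :
  ctmx (M *m N) = ctmx N *m ctmx M.
Proof. by rewrite /ctmx map_mxM trmx_mul. Qed.

Lemma ctmxK p q (M : 'M[C]_(p, q)) : ctmx (ctmx M) = M.
Proof. by apply/matrixP => i j; rewrite !mxE conjCK. Qed.

Lemma ctmx0 p q : ctmx (0 : 'M[C]_(p, q)) = 0.
Proof. by apply/matrixP => i j; rewrite !mxE rmorph0. Qed.

Lemma ctmx1 p : ctmx (1%:M : 'M[C]_p) = 1%:M.
Proof. by rewrite /ctmx map_mx1 trmx1. Qed.

Lemma rank_ctmx p q (M : 'M[C]_(p, q)) : \rank (ctmx M) = \rank M.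
Proof. by rewrite /ctmx mxrank_tr (mxrank_map Num.conj). Qed.

Lemma gram0 p q (X : 'M[C]_(p, q)) : X *m ctmx X = 0 -> X = 0.
Proof.
move=> H; apply/matrixP => i j; rewrite mxE.
have := congr1 (fun M : 'M[C]_p => M i i) H; rewrite !mxE.
under eq_bigr do rewrite !mxE -normCK.
move/psumr_eq0P => /(_ (fun k _ => exprn_ge0 2 (normr_ge0 _)) j isT) /eqP.
by rewrite sqrf_eq0 normr_eq0 => /eqP.
Qed.

Lemma fullcol_unit p r (F : 'M[C]_(p, r)) : \rank F = r -> ctmx F *m F \in unitmx.
Proof.
move=> hr; rewrite -row_free_unit -kermx_eq0; set u := kermx _.
have Hu : u *m (ctmx F *m F) = 0 := mulmx_ker _.
have H1 : (u *m ctmx F) *m ctmx (u *m ctmx F) = 0.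
  by rewrite ctmxM ctmxK !mulmxA -(mulmxA u) Hu mul0mx.
have H2 := gram0 H1.
have H3 : F *m ctmx u = 0 by rewrite -(ctmxK F) -ctmxM H2 ctmx0.
have /row_fullP [B HB] : row_full F by rewrite /row_full hr.
have H4 : ctmx u = 0 by rewrite -(mul1mx (ctmx u)) -HB -mulmxA H3 mulmx0.
by rewrite -(ctmxK u) H4 ctmx0.
Qed.

Variable n : nat.
Implicit Types A X : 'M[C]_n.

Lemma MP_exists A : exists X, is_MP A X.
Proof.
set F := col_base A; set G := row_base A.
have eA : A = F *m G by rewrite mulmx_base.
have rF : \rank F = \rank A by apply/eqP; exact: col_base_full.
have rG : \rank G = \rank A by apply/eqP; exact: row_base_free.
clearbody F G.
have hF : ctmx F *m F \in unitmx.
  exact: fullcol_unit.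
have hG : G *m ctmx G \in unitmx.
  rewrite -{1}(ctmxK G); apply: fullcol_unit; rewrite rank_ctmx.
  exact: rG.
set a := invmx (G *m ctmx G); set b := invmx (ctmx F *m F).
have cta : ctmx a = a.
  have e : ctmx a *m (G *m ctmx G) = 1%:M.
    have hh : ctmx (G *m ctmx G) = G *m ctmx G by rewrite ctmxM ctmxK.
    by rewrite -hh -ctmxM mulmxV // ctmx1.
  by rewrite -[RHS]mul1mx -e -mulmxA mulmxV // mulmx1.
have ctb : ctmx b = b.
  have e : ctmx b *m (ctmx F *m F) = 1%:M.
    have hh : ctmx (ctmx F *m F) = ctmx F *m F by rewrite ctmxM ctmxK.
    by rewrite -hh -ctmxM mulmxV // ctmx1.
  by rewrite -[RHS]mul1mx -e -mulmxA mulmxV // mulmx1.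
have eAl : forall Y : 'M_n, A *m Y = F *m G *m Y by move=> Y; rewrite -eA.
have eAr : forall Y : 'M_n, Y *m A = Y *m F *m G by move=> Y; rewrite -mulmxA -eA.
exists (ctmx G *m a *m b *m ctmx F).
have eAX : A *m (ctmx G *m a *m b *m ctmx F) = F *m b *m ctmx F.
  by rewrite eAl !mulmxA -(mulmxA F G (ctmx G)) -(mulmxA F (G *m ctmx G) a) mulmxV // mulmx1.
have eXA : (ctmx G *m a *m b *m ctmx F) *m A = ctmx G *m a *m G.
  by rewrite eAr ?mulmxA -(mulmxA (ctmx G *m a *m b) (ctmx F) F) -(mulmxA (ctmx G *m a) b (ctmx F *m F)) mulVmx // mulmx1.
split.
- by rewrite eAX eAr -(mulmxA (F*m b) (ctmx F) F) -(mulmxA F b _) mulVmx // mulmx1 -eA.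
- by rewrite eXA !mulmxA -(mulmxA (ctmx G *m a) G (ctmx G)) -(mulmxA (ctmx G *m a) (G *m ctmx G) a) mulmxV // mulmx1.
- by rewrite eAX !ctmxM ctmxK ctb mulmxA.
- by rewrite eXA !ctmxM ctmxK cta mulmxA.
Qed.
End Gen.
Section Alg.
Variable C : numClosedFieldType.
Variable n : nat.
Local Notation M := 'M[C]_n.

Lemma ctM (x y : M) : ctmx (x * y) = ctmx y * ctmx x.
Proof. by rewrite -!mulmxE ctmxM. Qed.

Lemma colsp_subP (X Y : M) : (colsp X <= colsp Y)%MS -> exists Z, X = Y * Z.
Proof.
move/submxP => [D HD]; exists D^T; rewrite /colsp in HD.
by rewrite -[X]trmxK HD trmx_mul trmxK mulmxE.
Qed.

Lemma colsp_sub (X Y Z : M) : X = Y * Z -> (colsp X <= colsp Y)%MS.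
Proof. by move->; rewrite /colsp -mulmxE trmx_mul submxMl. Qed.

Lemma colsp_eq (X Y Z1 Z2 : M) : X = Y * Z1 -> Y = X * Z2 -> (colsp X == colsp Y)%MS.
Proof. by move=> h1 h2; apply/andP; split; [exact: (colsp_sub h1)|exact: (colsp_sub h2)]. Qed.

Lemma nullsp_sub (X Y Z : M) : X = Z * Y -> (nullsp Y <= nullsp X)%MS.
Proof. by move->; rewrite /nullsp sub_kermx -mulmxE trmx_mul mulmxA mulmx_ker mul0mx. Qed.

Lemma nullsp_eq (X Y Z1 Z2 : M) : X = Z1 * Y -> Y = Z2 * X -> (nullsp X == nullsp Y)%MS.
Proof. by move=> h1 h2; apply/andP; split; [exact: (nullsp_sub h2)|exact: (nullsp_sub h1)]. Qed.

Lemma mpinv_spec (X : M) : is_MP X (mpinv X).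
Proof. exact: (xgetPex 0 (MP_exists X)). Qed.

Section MPfacts.
Variables X Xp : M.
Hypothesis h : is_MP X Xp.
Lemma mp1 : X * Xp * X = X. Proof. by case: h; rewrite -!mulmxE. Qed.
Lemma mp_ct : ctmx (X * Xp) = X * Xp. Proof. by case: h; rewrite -!mulmxE. Qed.
Lemma mp_range Z : X * Xp * (X * Z) = X * Z. Proof. by rewrite mulrA mp1. Qed.
Lemma mp_idem : X * Xp * (X * Xp) = X * Xp. Proof. exact: mp_range. Qed.
Lemma mp_ctK : ctmx X * (X * Xp) = ctmx X.
Proof. by rewrite -mp_ct -ctM mp1. Qed.
End MPfacts.

Lemma mp_same (X Xp Y Yp Z1 Z2 : M) : is_MP X Xp -> is_MP Y Yp ->
  X = Y * Z1 -> Y = X * Z2 -> X * Xp = Y * Yp.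
Proof.
move=> hX hY e1 e2.
have f1 : X * Xp * (Y * Yp) = Y * Yp by rewrite mulrA {1}e2 mp_range // -e2.
have f2 : Y * Yp * (X * Xp) = X * Xp by rewrite mulrA {1}e1 mp_range // -e1.
by rewrite -(mp_ct hX) -f2 ctM (mp_ct hX) (mp_ct hY) f1.
Qed.

Lemma ind_exists (A : M) : exists k, is_index A k.
Proof.
pose P j := (colsp (A ^+ j) == colsp (A ^+ j.+1))%MS.
have sub j : (colsp (A ^+ j.+1) <= colsp (A ^+ j))%MS.
  by apply: (@colsp_sub _ _ A); rewrite exprSr.
have exP : exists j, P j.
  apply/not_existsP => hn.
  have H j : (\rank (colsp (A ^+ j)) + j <= n)%N.
    elim: j => [|j IH]; first by rewrite addn0 rank_leq_row.
    have := mxrank_leqif_eq (sub j); move/ltn_leqif.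
    have -> : (colsp (A ^+ j.+1) == colsp (A ^+ j))%MS = P j.
      by rewrite /P /eqmx andbC.
    have -> : P j = false by apply/negP => Pj; apply: (hn j).
    by move=> /= lt; rewrite addnS; apply: leq_trans IH; rewrite ltn_add2r.
  by have := H n.+1; rewrite addnS ltnNge leq_addl.
exists (ex_minn exP); case: ex_minnP => k Pk mink; split => //.
by move=> j ltjk; apply/negP => Pj; have := mink j Pj; rewrite leqNgt ltjk.
Qed.

Lemma ind_spec (A : M) : is_index A (ind A).
Proof. exact: (xgetPex 0%N (ind_exists A)). Qed.

Lemma index_YW (A : M) k : is_index A k ->
  (exists Y, A ^+ k.+1 * Y = A ^+ k) /\ (exists W, W * A ^+ k.+1 = A ^+ k).
Proof.
case=> /andP [s1 s2] _; split.
  by have [Z ->] := colsp_subP s1; exists Z.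
have r : \rank (A ^+ k.+1) = \rank (A ^+ k).
  apply/eqP; rewrite -(mxrank_tr (A ^+ k.+1)) -(mxrank_tr (A ^+ k)).
  by rewrite eqn_leq !mxrankS.
have sk : (A ^+ k.+1 <= A ^+ k)%MS by rewrite exprS -mulmxE submxMl.
have := (mxrank_leqif_eq sk).2; rewrite r eqxx => /esym /andP [_ /submxP [W hW]].
by exists W; rewrite hW mulmxE.
Qed.
End Alg.
Section Drazin.
Variable C : numClosedFieldType.
Variable n : nat.
Local Notation M := 'M[C]_n.
Variables (A : M) (k : nat).

Lemma powY (Y : M) : A ^+ k.+1 * Y = A ^+ k ->
  forall i, (k <= i)%N -> A ^+ i.+1 * Y = A ^+ i.
Proof.
move=> hY i ki; have e : i.+1 = ((i - k) + k.+1)%N by rewrite addnS subnK.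
by rewrite e exprD -mulrA hY -exprD subnK.
Qed.

Lemma powW (W : M) : W * A ^+ k.+1 = A ^+ k ->
  forall i, (k <= i)%N -> W * A ^+ i.+1 = A ^+ i.
Proof.
move=> hW i ki; have e : i.+1 = (k.+1 + (i - k))%N by rewrite addSn subnKC.
by rewrite e exprD mulrA hW -exprD subnKC.
Qed.

Lemma powY2 (Y : M) : A ^+ k.+1 * Y = A ^+ k -> forall j, A ^+ (k + j) * Y ^+ j = A ^+ k.
Proof.
move=> hY; elim=> [|j IH]; first by rewrite addn0 expr0 mulr1.
by rewrite addnS (exprS Y) mulrA (powY hY) ?leq_addr.
Qed.

Lemma powW2 (W : M) : W * A ^+ k.+1 = A ^+ k -> forall j, W ^+ j * A ^+ (k + j) = A ^+ k.
Proof.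
move=> hW; elim=> [|j IH]; first by rewrite addn0 expr0 mul1r.
by rewrite addnS (exprSr W) -mulrA (powW hW) ?leq_addr.
Qed.

Lemma drazin_ex (Y W : M) : A ^+ k.+1 * Y = A ^+ k -> W * A ^+ k.+1 = A ^+ k ->
  exists D : M, [/\ D * A * D = D, A * D = D * A & D * A ^+ k.+1 = A ^+ k].
Proof.
move=> hY hW; have L1 := powY2 hY; have L2 := powW2 hW.
set D := A ^+ k * Y ^+ k.+1.
have eD : D = W ^+ k.+1 * A ^+ k by rewrite -(L1 k.+1) mulrA L2.
have eAD : A * D = A ^+ k * Y ^+ k by rewrite /D mulrA -exprS (exprS Y) mulrA hY.
have eDA : D * A = W ^+ k * A ^+ k by rewrite eD -mulrA -exprSr (exprSr W) -mulrA hW.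
have eKK : A ^+ k * Y ^+ k = W ^+ k * A ^+ k.
  by rewrite -{1}(L2 k) -mulrA L1.
exists D; split.
- by rewrite eDA /D mulrA -(mulrA (W ^+ k) (A ^+ k) (A ^+ k)) -exprD L2.
- by rewrite eAD eDA.
- by rewrite eD -mulrA -exprD L2.
Qed.

Section DrazinFacts.
Variable D : M.
Hypotheses (hD1 : D * A * D = D) (hD2 : A * D = D * A) (hD3 : D * A ^+ k.+1 = A ^+ k).

Lemma drazin_pow j : D ^+ j.+1 * A ^+ j = D.
Proof.
elim: j => [|j IH]; first by rewrite expr1 expr0 mulr1.
have e : D * (D * A) = D by rewrite -hD2 mulrA hD1.
have e' (X : M) : X * D * D * A = X * D by rewrite -!mulrA e.
by rewrite (exprSr D) (exprS A) mulrA (exprSr D) e' -exprSr IH.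
Qed.

Lemma drazin_range : D = A ^+ k * D ^+ k.+1.
Proof.
have c : GRing.comm (A ^+ k) (D ^+ k.+1).
  by apply: commrX; apply: commr_sym; apply: commrX; exact: (esym hD2).
by rewrite c drazin_pow.
Qed.

Lemma drazin_AK : D * A * A ^+ k = A ^+ k.
Proof. by rewrite -mulrA -exprS hD3. Qed.
End DrazinFacts.
End Drazin.
Section CoreEP.
Variable C : numClosedFieldType.
Variable n : nat.
Local Notation M := 'M[C]_n.
Variables (A D Kp Y : M) (k : nat).
Hypotheses (hY : A ^+ k.+1 * Y = A ^+ k) (hK : is_MP (A ^+ k) Kp).
Hypotheses (hD1 : D * A * D = D) (hD2 : A * D = D * A) (hD3 : D * A ^+ k.+1 = A ^+ k).
Local Notation K := (A ^+ k).
Local Notation P := (A ^+ k * Kp).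

Lemma PKZ Z : P * (K * Z) = K * Z. Proof. exact: mp_range. Qed.

Lemma PApow i : (k <= i)%N -> P * A ^+ i = A ^+ i.
Proof. by move=> ki; rewrite -(subnKC ki) exprD PKZ. Qed.

Lemma PD : P * D = D.
Proof. by rewrite (drazin_range k hD1 hD2) PKZ. Qed.

Lemma cEP_unique X : X * A * X = X -> (colsp X == colsp K)%MS ->
  (colsp (ctmx X) == colsp K)%MS -> X = D * P.
Proof.
move=> hX /andP [s1 s2] /andP [s3 _].
have [Z1 e1] := colsp_subP s1; have [Z2 e2] := colsp_subP s2.
have [Z3 e3] := colsp_subP s3.
have hXP : X * P = X by rewrite -[X]ctmxK e3 ctM -mulrA (mp_ctK hK).
have hDAX : D * A * X = X by rewrite {1}e1 mulrA (drazin_AK hD3) -e1.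
have eK : A * X * (Z2 * Y) = K by rewrite !mulrA -(mulrA A X Z2) -e2 -exprS hY.
have AXAX : A * X * (A * X) = A * X by rewrite -mulrA (mulrA X A X) hX.
have AXK : A * X * K = K by rewrite -{1}eK mulrA AXAX eK.
have hAXP : A * X * P = P by rewrite mulrA AXK.
by rewrite -hAXP mulrA (mulrA D A X) hDAX hXP.
Qed.

Lemma cEP_exists : let X := D * P in
  [/\ X * A * X = X, (colsp X == colsp K)%MS & (colsp (ctmx X) == colsp K)%MS].
Proof.
move=> X.
have PAD : P * (A * D) = A * D.
  by rewrite hD2 mulrA PD.
have e1 : X = K * (D ^+ k.+1 * P) by rewrite mulrA -(drazin_range k hD1 hD2).
have e2 : K = X * A ^+ k.+1 by rewrite /X -mulrA PApow // hD3.
have s12 : (colsp X == colsp K)%MS := colsp_eq e1 e2.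
split => //.
  have -> : X * A * X = D * (P * (A * D)) * P by rewrite /X !mulrA.
  by rewrite PAD (mulrA D A D) hD1.
have e3 : ctmx X = K * (Kp * ctmx D) by rewrite /X ctM (mp_ct hK) mulrA.
have s3 := colsp_sub e3.
rewrite -(mxrank_leqif_eq s3).2 /colsp (mxrank_tr (ctmx X)) (mxrank_tr K) rank_ctmx.
by rewrite -(mxrank_tr X) -(mxrank_tr K) (eqmx_rank s12).
Qed.
End CoreEP.
Section Items.
Variable C : numClosedFieldType.
Variable n : nat.
Local Notation M := 'M[C]_n.
Variables (A Cc P Q : M) (k m : nat).
Hypotheses (hm : (0 < m)%N).
Hypotheses (hAC : A * Cc = P) (hPC : P * Cc = Cc) (hCP : Cc * P = Cc).
Hypothesis hCA : forall j, (k <= j)%N -> Cc * A ^+ j.+1 = A ^+ j.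
Hypothesis hCAP : forall j, Cc * A ^+ j.+1 * P = A ^+ j * P.
Hypotheses (hQC : Q * Cc = Cc) (hQP : Q * P = P).
Hypothesis hQA : forall i, (k <= i)%N -> Q * A ^+ i = A ^+ i.
Hypothesis hQAm : forall i, (m <= i)%N -> Q * A ^+ i = A ^+ i.

Lemma L_F5 j : Cc ^+ j * A ^+ j * P = P.
Proof.
elim: j => [|j IH]; first by rewrite !expr0 !mul1r.
by rewrite (exprSr Cc) -!mulrA (mulrA Cc) hCAP mulrA IH.
Qed.

Lemma L_F7 j : P * Cc ^+ j.+1 = Cc ^+ j.+1.
Proof. by rewrite exprS mulrA hPC. Qed.

Lemma L_F8 i j : Cc ^+ j * A ^+ j * Cc ^+ i.+1 = Cc ^+ i.+1.
Proof. by rewrite -{1}L_F7 mulrA L_F5 L_F7. Qed.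

Lemma L_F9 j i : (k <= i)%N -> Cc ^+ j * A ^+ (j + i) = A ^+ i.
Proof.
move=> ki; elim: j => [|j IH]; first by rewrite expr0 mul1r add0n.
by rewrite (exprSr Cc) addSn -mulrA hCA ?(leq_trans ki (leq_addl _ _)).
Qed.

Lemma L_F6 j : A ^+ j.+1 * Cc ^+ j.+1 = P.
Proof.
elim: j => [|j IH]; first by rewrite !expr1.
rewrite (exprSr A) (exprS Cc) -mulrA (mulrA A Cc) hAC L_F7 //.
Qed.

Lemma L_QC j : Q * Cc ^+ j.+1 = Cc ^+ j.+1.
Proof. by rewrite exprS mulrA hQC. Qed.

Lemma L_F7m : P * Cc ^+ m = Cc ^+ m.
Proof. by rewrite -(prednK hm) L_F7. Qed.
Lemma L_QCm : Q * Cc ^+ m = Cc ^+ m.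
Proof. by rewrite -(prednK hm) L_QC. Qed.

Local Notation G := (Cc ^+ m.+1 * A ^+ m).
Local Notation W := (Cc ^+ m.+1 * A ^+ m * Q).

Lemma AG : A * G = Cc ^+ m * A ^+ m.
Proof. by rewrite mulrA (exprS Cc) mulrA hAC L_F7m. Qed.

Lemma GAG : G * A * G = G.
Proof.
have -> : G * A * G = Cc ^+ m.+1 * A ^+ m.+1 * Cc ^+ m.+1 * A ^+ m.
  by rewrite (exprSr A m) !mulrA.
by rewrite L_F8.
Qed.

Lemma QAG : Q * (A * G) = A * G.
Proof. by rewrite AG mulrA L_QCm. Qed.

Lemma PAG : P * (A * G) = A * G.
Proof. by rewrite AG mulrA L_F7m. Qed.

Lemma QG : Q * G = G.
Proof. by rewrite mulrA L_QC. Qed.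

Lemma item_a : W * A * W = W.
Proof.
have -> : W * A * W = G * (Q * (A * G)) * Q by rewrite !mulrA.
by rewrite QAG (mulrA G A G) GAG.
Qed.

Lemma item_c : A * (W ^+ 2) = W.
Proof.
have -> : A * (W ^+ 2) = A * G * (Q * G) * Q by rewrite expr2 !mulrA.
rewrite QG AG (mulrA (Cc ^+ m * A ^+ m) (Cc ^+ m.+1) (A ^+ m)) L_F8 //.
Qed.

Lemma item_d l : (k <= l)%N -> W * A ^+ l.+1 = A ^+ l.
Proof.
move=> kl; rewrite -mulrA hQA ?(leq_trans kl) // -mulrA -exprD.
by rewrite -addSnnS L_F9.
Qed.

Lemma item_j : W * A ^+ m.+1 = Cc ^+ m.+1 * A ^+ (2 * m).+1.
Proof.
rewrite -mulrA hQAm // -mulrA -exprD.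
by have -> : (m + m.+1 = (2 * m).+1)%N by rewrite addnS mul2n addnn.
Qed.

Lemma item_b1 : (A * Cc * A) * W * (A * Cc * A) = A * Cc * A.
Proof.
rewrite hAC.
have -> : P * A * W * (P * A) = P * (A * G) * (Q * P) * A by rewrite !mulrA.
by rewrite AG hQP (mulrA P (Cc ^+ m) (A ^+ m)) L_F7m L_F5.
Qed.

Lemma item_b2 : W * (A * Cc * A) * W = W.
Proof.
rewrite hAC.
have -> : W * (P * A) * W = G * ((Q * P) * (A * G)) * Q by rewrite !mulrA.
by rewrite hQP PAG (mulrA G A G) GAG.
Qed.

Lemma PW : P * W = W.
Proof. by rewrite !mulrA L_F7. Qed.

Lemma CmP : Cc ^+ m.+1 * P = Cc ^+ m.+1.
Proof. by rewrite exprSr -mulrA hCP. Qed.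

Lemma WP : W = Cc ^+ m.+1 * P * A ^+ m * Q.
Proof. by rewrite CmP. Qed.

Lemma PAmQ : P * A ^+ m * Q = A ^+ m.+1 * W.
Proof. by rewrite -(L_F6 m) !mulrA. Qed.
End Items.
Theorem theorem4p7 (n : nat) (A : 'M[Cplx]_n) (l m : nat) :
  (ind A <= l)%N -> (1 <= m)%N ->
  let k := ind A in
  let Wm := wcore A m in
  let A1 := A *m coreEP A *m A in
  (* (a) *) Wm *m A *m Wm = Wm /\
      (* (b) *) (A1 *m Wm *m A1 = A1 /\ Wm *m A1 *m Wm = Wm) /\
      (* (c) *) A *m (Wm ^+ 2) = Wm /\
      (* (d) *) Wm *m A ^+ l.+1 = A ^+ l /\
      (* (e) *) Wm = (drazin A) ^+ m.+1 *m projP (A ^+ l) *m A ^+ m *m projP (A ^+ m) /\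
      (* (f) *) Wm = A ^+ l *m mpinv (A ^+ (l + m).+1) *m A ^+ m *m projP (A ^+ m) /\
      (* (g) *) \rank Wm = \rank (A ^+ k) /\
      (* (h) *) (colsp Wm == colsp (A ^+ k))%MS /\
      (* (i) *) (nullsp Wm == nullsp (ctmx (A ^+ k) *m A ^+ m *m projP (A ^+ m)))%MS /\
      (* (j) *) Wm *m A ^+ m.+1 = (coreEP A) ^+ m.+1 *m A ^+ (2 * m).+1.
Proof.
move=> hl hm k Wm A1.
rewrite /Wm /A1 /wcore /wg /projP /k; clear Wm A1 k.
set k := ind A.
have hidx : is_index A k := ind_spec A.
have [[Y hY] [W0 hW]] := index_YW hidx.
have [D0 [d1 d2 d3]] := drazin_ex hY hW.
have hDr : is_drazin A (drazin A).
  by apply: (xgetPex 0); exists D0; split; rewrite !mulmxE.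
case: hDr; rewrite !mulmxE => hD1 hD2 hD3.
set D := drazin A in hD1 hD2 hD3 *.
have {}hD3 : D * A ^+ k.+1 = A ^+ k := hD3.
have hK : is_MP (A ^+ k) (mpinv (A ^+ k)) := mpinv_spec _.
set Kp := mpinv (A ^+ k) in hK *.
have hCe : is_coreEP A (coreEP A).
  apply: (xgetPex 0); exists (D * (A ^+ k * Kp)).
  have [e1 e2 e3] := cEP_exists hK hD1 hD2 hD3.
  by split; rewrite ?mulmxE.
case: hCe; rewrite !mulmxE => c1 c2 c3.
have eC : coreEP A = D * (A ^+ k * Kp) := cEP_unique hY hK hD3 c1 c2 c3.
rewrite eC; have {}hl : (k <= l)%N := hl.
clear c1 c2 c3 eC d1 d2 d3 D0.
clearbody k D Kp.
have hQ : is_MP (A ^+ m) (mpinv (A ^+ m)) := mpinv_spec _.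
move: (mpinv (A ^+ m)) hQ => Qp hQ.
have hL : is_MP (A ^+ l) (mpinv (A ^+ l)) := mpinv_spec _.
move: (mpinv (A ^+ l)) hL => Lp hL.
have hM : is_MP (A ^+ (l + m).+1) (mpinv (A ^+ (l + m).+1)) := mpinv_spec _.
move: (mpinv (A ^+ (l + m).+1)) hM => Mp hM.
have [Z eZ] : exists Z, A ^+ k = A ^+ m * Z.
  case: (leqP m k) => mk.
    by exists (A ^+ (k - m)); rewrite -exprD subnKC.
  exists (Y ^+ (m - k)); rewrite -{1}(powY2 hY (m - k)) subnKC //.
  exact: ltnW.
have hPD := PD hK hD1 hD2.
have hPC : A ^+ k * Kp * (D * (A ^+ k * Kp)) = D * (A ^+ k * Kp) by rewrite mulrA hPD.
have hCP : D * (A ^+ k * Kp) * (A ^+ k * Kp) = D * (A ^+ k * Kp) by rewrite -mulrA (mp_idem hK).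
have hAC : A * (D * (A ^+ k * Kp)) = A ^+ k * Kp.
  by rewrite mulrA (mulrA (A * D)) hD2 (drazin_AK hD3).
have hCA : forall j, (k <= j)%N -> D * (A ^+ k * Kp) * A ^+ j.+1 = A ^+ j.
  move=> j kj; rewrite -mulrA (PApow hK) ?(leq_trans kj) //.
  have e : j.+1 = (k.+1 + (j - k))%N by rewrite addSn subnKC.
  by rewrite e exprD mulrA hD3 -exprD subnKC.
have hCAP : forall j, D * (A ^+ k * Kp) * A ^+ j.+1 * (A ^+ k * Kp) = A ^+ j * (A ^+ k * Kp).
  move=> j; rewrite (mulrA (D * (A ^+ k * Kp) * A ^+ j.+1) (A ^+ k) Kp) -(mulrA _ (A ^+ j.+1) (A ^+ k)) -exprD addSn hCA ?leq_addl //.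
  by rewrite exprD mulrA.
have hQK : A ^+ m * Qp * A ^+ k = A ^+ k by rewrite eZ (mp_range hQ).
have hQP : A ^+ m * Qp * (A ^+ k * Kp) = A ^+ k * Kp by rewrite mulrA hQK.
have hQC : A ^+ m * Qp * (D * (A ^+ k * Kp)) = D * (A ^+ k * Kp).
  by rewrite -{1}hPC mulrA hQP hPC.
have hQA : forall i, (k <= i)%N -> A ^+ m * Qp * A ^+ i = A ^+ i.
  by move=> i ki; rewrite -(subnKC ki) exprD mulrA hQK.
have hQAm : forall i, (m <= i)%N -> A ^+ m * Qp * A ^+ i = A ^+ i.
  by move=> i mi; rewrite -(subnKC mi) exprD (mp_range hQ).
have eL : A ^+ l * Lp = A ^+ k * Kp.
  apply: (mp_same hL hK (Z1 := A ^+ (l - k)) (Z2 := Y ^+ (l - k))).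
    by rewrite -exprD subnKC.
  by rewrite -{1}(powY2 hY (l - k)) subnKC.
have eM : A ^+ (l + m).+1 * Mp = A ^+ k * Kp.
  have klm : (k <= (l + m).+1)%N by rewrite (leq_trans hl) // ltnW // ltnS leq_addr.
  apply: (mp_same hM hK (Z1 := A ^+ ((l + m).+1 - k)) (Z2 := Y ^+ ((l + m).+1 - k))).
    by rewrite -exprD subnKC.
  by rewrite -{1}(powY2 hY ((l + m).+1 - k)) subnKC.
have Dpow : forall j, D ^+ j.+1 * (A ^+ k * Kp) = (D * (A ^+ k * Kp)) ^+ j.+1.
  elim=> [|j IH]; first by rewrite !expr1.
  by rewrite (exprS D) -mulrA IH [in RHS]exprS -mulrA (L_F7 hPC).
have ctP : A ^+ k * Kp = ctmx Kp * ctmx (A ^+ k) by rewrite -ctM (mp_ct hK).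
have ctKP : ctmx (A ^+ k) * (A ^+ k * Kp) = ctmx (A ^+ k) := mp_ctK hK.
have Dm := Dpow m.
move: (D * (A ^+ k * Kp)) hPC hCP hAC hCA hCAP hQC Dm => Cc hPC hCP hAC hCA hCAP hQC Dm.
have ekl := powY2 hY (l - k); rewrite subnKC // in ekl.
split; first exact: (item_a hm hAC hPC hCAP hQC).
split; first by split; [exact: (item_b1 hm hAC hPC hCAP hQP) | exact: (item_b2 hm hAC hPC hCAP hQP)].
split; first exact: (item_c hm hAC hPC hCAP hQC).
split; first exact: (item_d m hCA hQA hl).
split.
  congr (_ * _ * _); by rewrite eL Dm.
split.
  have e : (m.+1 + l = (l + m).+1)%N by rewrite addSn addnC.
  rewrite -{1}(L_F9 hCA m.+1 hl) e.
  by rewrite -(mulrA _ (A ^+ (l + m).+1)) eM (CmP _ hCP).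
have hh : (colsp (Cc ^+ m.+1 * A ^+ m * (A ^+ m * Qp)) == colsp (A ^+ k))%MS.
  apply: (colsp_eq (Z1 := Kp * (Cc ^+ m.+1 * A ^+ m * (A ^+ m * Qp)))
                   (Z2 := A ^+ l.+1 * Y ^+ (l - k))).
    by rewrite (mulrA (A ^+ k) Kp) (PW _ _ _ hPC).
  by rewrite (mulrA _ (A ^+ l.+1)) (item_d m hCA hQA hl) ekl.
split.
  by have := eqmx_rank hh; rewrite /colsp !mxrank_tr.
split; first exact: hh.
split; last exact: (item_j Cc hQAm).
apply: (nullsp_eq (Z1 := Cc ^+ m.+1 * ctmx Kp) (Z2 := ctmx (A ^+ k) * A ^+ m.+1)).
  by rewrite (WP _ _ _ hCP) ctP !mulrA.
have e1 : ctmx (A ^+ k) * A ^+ m.+1 * (Cc ^+ m.+1 * A ^+ m * (A ^+ m * Qp))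
   = ctmx (A ^+ k) * (A ^+ k * Kp * A ^+ m * (A ^+ m * Qp)).
  by rewrite (PAmQ _ _ hAC hPC) (mulrA (ctmx (A ^+ k)) (A ^+ m.+1)).
rewrite e1 (mulrA (ctmx (A ^+ k)) (A ^+ k * Kp * A ^+ m)).
by rewrite (mulrA (ctmx (A ^+ k)) (A ^+ k * Kp)) ctKP.
Qed.
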